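(* Consider problem (PI): minimize $f(x)$ subject to $x\in X$, $g_i(x)\le 0$, $i=1,\dots,m$, where $\Gamma\subseteq\mathbb R^n$ is an open convex set and $X\subseteq\Gamma$ is open and convex. Let $\bar S$ be its solution set and $\bar x\in\bar S$. Assume $f:\Gamma\to\mathbb R$ is continuously differentiable and quasiconvex on $\Gamma$, $g_i$ for $i\in I(\bar x)$ are differentiable and quasiconvex on $\Gamma$, $g_i$ for $i\notin I(\bar x)$ are continuous at $\bar x$, $\nabla f(\bar x)\ne 0$, MFCQ holds at $\bar x$, and $\lambda\in\mathbb R^m$ is a fixed multiplier with $\lambda_i\ge0$, $\lambda_ig_i(\bar x)=0$ for all $i$ and $\nabla f(\bar x)+\sum_{i\in I(\bar x)}\lambda_i\nabla g_i(\bar x)=0$. Define \[ \hat S_1''(\lambda):=\Big\{x\in X_1(\lambda)\ \Big|\ \nabla g_i(\bar x)^T(x-\bar x)=0\ \forall i\in\tilde I(\bar x,\lambda),\ \nabla f(x)\ne0,\ \tfrac{\nabla f(x)}{\|\nabla f(x)\|}=\tfrac{\nabla f(\bar x)}{\|\nabla f(\bar x)\|}\Big\}, \] \[ \hat S_2''(\lambda):=\Big\{x\in X_1(\lambda)\ \Big|\ \nabla g_i(\bar x)^T(x-\bar x)\ge0\ \forall i\in\tilde I(\bar x,\lambda),\ \nabla f(x)\ne0,\ \tfrac{\nabla f(x)}{\|\nabla f(x)\|}=\tfrac{\nabla f(\bar x)}{\|\nabla f(\bar x)\|}\Big\}. \] Then $\bar S=\hat S_1''(\lambda)=\hat S_2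''(\lambda)$.
   Context: Quasiconvexity on $\Gamma$: $f(x+t(y-x))\le\max\{f(x),f(y)\}$ for all $x,y\in\Gamma$, $t\in[0,1]$. Feasible set $S:=\{x\in X\mid g_i(x)\le0,\ i=1,\dots,m\}$; $\bar S$ the set of global minimizers of $f$ on $S$. Active index set $I(x):=\{i\mid g_i(x)=0\}$. MFCQ holds at $\bar x$ iff there is $y\in\mathbb R^n$ with $\nabla g_i(\bar x)^Ty<0$ for all $i\in I(\bar x)$. Define $\tilde I(\bar x,\lambda):=\{i\mid g_i(\bar x)=0,\ \lambda_i>0\}$ and $X_1(\lambda):=\{x\in X\mid g_i(x)=0\ \forall i\in\tilde I(\bar x,\lambda),\ g_i(x)\le0\ \forall i\notin\tilde I(\bar x,\lambda)\}$. *)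

(* Defs.v *)
From mathcomp Require Import all_boot.
From Stdlib Require Import Reals.
Set Implicit Arguments. Unset Strict Implicit.
Open Scope R_scope.

Definition vec (n : nat) := 'I_n -> R.

Definition vadd n (u v : vec n) : vec n := fun k => u k + v k.
Definition vsub n (u v : vec n) : vec n := fun k => u k - v k.
Definition vscale n (t : R) (u : vec n) : vec n := fun k => t * u k.
Definition vzero n : vec n := fun _ => 0.
Definition dot n (u v : vec n) : R := \big[Rplus/0]_(k < n) (u k * v k).
Definition vnorm n (u : vec n) : R := sqrt (dot u u).

Definition is_open n (U : vec n -> Prop) : Prop :=
  forall x, U x -> exists eps, 0 < eps /\
    forall y, vnorm (vsub y x) < eps -> U y.

Definition is_convex n (U : vec n -> Prop) : Prop :=
  forall x y t, U x -> U y -> 0 <= t <= 1 ->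
    U (vadd x (vscale t (vsub y x))).

Definition quasiconvex_on n (Gam : vec n -> Prop) (f : vec n -> R) : Prop :=
  forall x y t, Gam x -> Gam y -> 0 <= t <= 1 ->
    f (vadd x (vscale t (vsub y x))) <= Rmax (f x) (f y).

Definition has_gradient n (f : vec n -> R) (x d : vec n) : Prop :=
  forall eps, 0 < eps -> exists delta, 0 < delta /\
    forall h, vnorm h < delta ->
      Rabs (f (vadd x h) - f x - dot d h) <= eps * vnorm h.

Definition continuous_at_v n (f : vec n -> R) (x : vec n) : Prop :=
  forall eps, 0 < eps -> exists delta, 0 < delta /\
    forall y, vnorm (vsub y x) < delta -> Rabs (f y - f x) < eps.

Definition vcontinuous_at n (F : vec n -> vec n) (x : vec n) : Prop :=
  forall eps, 0 < eps -> exists delta, 0 < delta /\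
    forall y, vnorm (vsub y x) < delta -> vnorm (vsub (F y) (F x)) < eps.

Definition feasible n m (X : vec n -> Prop) (g : 'I_m -> vec n -> R)
  (x : vec n) : Prop := X x /\ forall i, g i x <= 0.

Definition solution_set n m (X : vec n -> Prop) (f : vec n -> R)
  (g : 'I_m -> vec n -> R) (x : vec n) : Prop :=
  feasible X g x /\ forall y, feasible X g y -> f x <= f y.

Definition active n m (g : 'I_m -> vec n -> R) (x : vec n) (i : 'I_m) : Prop :=
  g i x = 0.

Definition active_pos n m (g : 'I_m -> vec n -> R) (xbar : vec n)
  (lam : 'I_m -> R) (i : 'I_m) : Prop := g i xbar = 0 /\ 0 < lam i.

Definition X1 n m (X : vec n -> Prop) (g : 'I_m -> vec n -> R) (xbar : vec n)
  (lam : 'I_m -> R) (x : vec n) : Prop :=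
  X x /\ (forall i, active_pos g xbar lam i -> g i x = 0)
      /\ (forall i, ~ active_pos g xbar lam i -> g i x <= 0).

Definition same_direction n (u v : vec n) : Prop :=
  forall k, u k / vnorm u = v k / vnorm v.

Definition S1hat n m (X : vec n -> Prop) (g : 'I_m -> vec n -> R)
  (gradf : vec n -> vec n) (gradg : 'I_m -> vec n -> vec n)
  (xbar : vec n) (lam : 'I_m -> R) (x : vec n) : Prop :=
  X1 X g xbar lam x /\
  (forall i, active_pos g xbar lam i -> dot (gradg i xbar) (vsub x xbar) = 0) /\
  gradf x <> @vzero n /\ same_direction (gradf x) (gradf xbar).

Definition S2hat n m (X : vec n -> Prop) (g : 'I_m -> vec n -> R)
  (gradf : vec n -> vec n) (gradg : 'I_m -> vec n -> vec n)
  (xbar : vec n) (lam : 'I_m -> R) (x : vec n) : Prop :=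
  X1 X g xbar lam x /\
  (forall i, active_pos g xbar lam i -> 0 <= dot (gradg i xbar) (vsub x xbar)) /\
  gradf x <> @vzero n /\ same_direction (gradf x) (gradf xbar).

(* Main.v *)
Require Import Defs.
From HB Require Import structures.
From mathcomp Require Import all_boot.
From Stdlib Require Import Reals Lra FunctionalExtensionality Classical.
Open Scope R_scope.
Set Implicit Arguments. Unset Strict Implicit.

HB.instance Definition _ := Monoid.isComLaw.Build R 0 Rplus
  (fun a b c => esym (Rplus_assoc a b c)) Rplus_comm Rplus_0_l.

Section Sums.
Variable n : nat.
Implicit Types F G : 'I_n -> R.

Lemma sumD F G : \big[Rplus/0]_(k<n) (F k + G k) =
  \big[Rplus/0]_(k<n) F k + \big[Rplus/0]_(k<n) G k.
Proof. exact: big_split. Qed.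

Lemma sumZ a F : \big[Rplus/0]_(k<n) (a * F k) = a * \big[Rplus/0]_(k<n) F k.
Proof.
apply: (big_rec2 (fun y1 y2 => y1 = a * y2)); first by ring.
by move=> i y1 y2 _ ->; ring.
Qed.

Lemma sum_le F G : (forall k, F k <= G k) ->
  \big[Rplus/0]_(k<n) F k <= \big[Rplus/0]_(k<n) G k.
Proof.
move=> H; apply: (big_ind2 (fun y1 y2 => y1 <= y2)); first lra.
  by move=> ? ? ? ? ? ?; lra.
by move=> i _; apply: H.
Qed.

Lemma sum_ge0 F : (forall k, 0 <= F k) -> 0 <= \big[Rplus/0]_(k<n) F k.
Proof.
move=> H; apply: (big_ind (fun y => 0 <= y)); first lra.
  by move=> ? ? ? ?; lra.
by move=> i _; apply: H.
Qed.

Lemma sum_le0 F : (forall k, F k <= 0) -> \big[Rplus/0]_(k<n) F k <= 0.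
Proof.
move=> H; apply: (big_ind (fun y => y <= 0)); first lra.
  by move=> ? ? ? ?; lra.
by move=> i _; apply: H.
Qed.

Lemma term_le_sum F j : (forall k, 0 <= F k) -> F j <= \big[Rplus/0]_(k<n) F k.
Proof.
move=> H; rewrite (bigD1 j) //=.
rewrite -{1}(Rplus_0_r (F j)); apply: Rplus_le_compat_l.
  apply: (big_ind (fun y => 0 <= y)); first lra.
    by move=> ? ? ? ?; lra.
  by move=> i _; apply: H.
Qed.

Lemma sum_ge_term F j : (forall k, F k <= 0) -> \big[Rplus/0]_(k<n) F k <= F j.
Proof.
move=> H; rewrite (bigD1 j) //=.
rewrite -{2}(Rplus_0_r (F j)); apply: Rplus_le_compat_l.
  apply: (big_ind (fun y => y <= 0)); first lra.
    by move=> ? ? ? ?; lra.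
  by move=> i _; apply: H.
Qed.

Lemma sum_abs F : Rabs (\big[Rplus/0]_(k<n) F k) <= \big[Rplus/0]_(k<n) Rabs (F k).
Proof.
apply: (big_ind2 (fun y1 y2 => Rabs y1 <= y2)).
  by rewrite Rabs_R0; lra.
  move=> x1 x2 y1 y2 H1 H2.
  have := Rabs_triang x1 y1; lra.
by move=> i _; lra.
Qed.

End Sums.

Section Vec.
Variable n : nat.
Implicit Types u v w d e : vec n.

Lemma dot_addr d u v : dot d (vadd u v) = dot d u + dot d v.
Proof. rewrite /dot -sumD; apply: eq_bigr => k _; rewrite /vadd; ring. Qed.

Lemma dot_scaler d s u : dot d (vscale s u) = s * dot d u.
Proof. rewrite /dot -sumZ; apply: eq_bigr => k _; rewrite /vscale; ring. Qed.

Lemma dot_subr d u v : dot d (vsub u v) = dot d u - dot d v.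
Proof.
rewrite /dot.
have -> : \big[Rplus/0]_(k<n) (d k * vsub u v k) =
  \big[Rplus/0]_(k<n) (d k * u k + (-1) * (d k * v k)).
  by apply: eq_bigr => k _; rewrite /vsub; ring.
rewrite sumD sumZ; ring.
Qed.

Lemma dot_comm u v : dot u v = dot v u.
Proof. rewrite /dot; apply: eq_bigr => k _; ring. Qed.

Lemma dot_scalel d s u : dot (vscale s u) d = s * dot u d.
Proof. by rewrite dot_comm dot_scaler dot_comm. Qed.

Lemma dot_subl d u v : dot (vsub u v) d = dot u d - dot v d.
Proof. by rewrite dot_comm dot_subr (dot_comm d u) (dot_comm d v). Qed.

Lemma dot_self_ge0 u : 0 <= dot u u.
Proof. apply: sum_ge0 => k; nra. Qed.

Lemma dot_self_pos u : u <> @vzero n -> 0 < dot u u.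
Proof.
move=> Hu.
have [k Hk] : exists k, u k <> 0.
  apply: NNPP => H; apply: Hu; apply: functional_extensionality => k.
  rewrite /vzero; apply: NNPP => Hk; apply: H; by exists k.
have := @term_le_sum n (fun k => u k * u k) k (fun k => ltac:(nra)).
rewrite /dot /=. have : 0 < u k * u k by nra. lra.
Qed.

Lemma dot_self_eq0 u : dot u u = 0 -> forall k, u k = 0.
Proof.
move=> H k.
have := @term_le_sum n (fun k => u k * u k) k (fun k => ltac:(nra)).
rewrite -/(dot u u) H /=. nra.
Qed.

Lemma coord_le_norm u k : Rabs (u k) <= vnorm u.
Proof.
rewrite /vnorm -sqrt_Rsqr_abs; apply: sqrt_le_1_alt.
rewrite /Rsqr.
exact: (@term_le_sum n (fun k => u k * u k) k (fun k => ltac:(nra))).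
Qed.

Lemma dot_bound w g : Rabs (dot w g) <= vnorm w * \big[Rplus/0]_(k<n) Rabs (g k).
Proof.
apply: Rle_trans; first exact: sum_abs.
rewrite -sumZ; apply: sum_le => k.
rewrite Rabs_mult; apply: Rmult_le_compat_r; first exact: Rabs_pos.
exact: coord_le_norm.
Qed.

Lemma vnorm_scale s u : vnorm (vscale s u) = Rabs s * vnorm u.
Proof.
rewrite /vnorm.
have -> : dot (vscale s u) (vscale s u) = Rsqr s * dot u u.
  rewrite /dot /Rsqr -sumZ; apply: eq_bigr => k _; rewrite /vscale; ring.
rewrite sqrt_mult; [|exact: Rle_0_sqr|exact: dot_self_ge0].
by rewrite sqrt_Rsqr_abs.
Qed.

Lemma vnorm_ge0 u : 0 <= vnorm u.
Proof. exact: sqrt_pos. Qed.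

Lemma vnorm_pos u : u <> @vzero n -> 0 < vnorm u.
Proof. move=> H; apply: sqrt_lt_R0; exact: dot_self_pos. Qed.

Lemma vsub_line y e s : vsub (vadd y (vscale s e)) y = vscale s e.
Proof. apply: functional_extensionality => k; rewrite /vsub /vadd /vscale; ring. Qed.

End Vec.
Section Anal.
Variable n : nat.
Implicit Types u v w d e x y : vec n.

Lemma abs_le_inv a b : Rabs a <= b -> -b <= a <= b.
Proof.
move=> H; split; [have := Rle_abs (-a); rewrite Rabs_Ropp | have := Rle_abs a]; lra.
Qed.

Lemma small_zero D : (forall eps, 0 < eps -> Rabs D <= eps) -> D = 0.
Proof.
move=> H; apply: NNPP => HD.
have Hp : 0 < Rabs D by apply: Rabs_pos_lt.
have := H (Rabs D / 2) ltac:(lra). lra.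
Qed.

Lemma small_le D : (forall eps, 0 < eps -> D <= eps) -> D <= 0.
Proof.
move=> H; apply: Rnot_lt_le => HD.
have := H (D / 2) ltac:(lra). lra.
Qed.

Lemma divmul a (b : vec n) : a / (vnorm b + 1) * (vnorm b + 1) = a.
Proof. have := vnorm_ge0 b. move=> ?; field; lra. Qed.

Lemma LD h y d e : has_gradient h y d -> forall eps, 0 < eps ->
  exists delta, 0 < delta /\ forall s, Rabs s < delta ->
   Rabs (h (vadd y (vscale s e)) - h y - s * dot d e) <= eps * Rabs s.
Proof.
move=> Hd eps Heps.
have Hne := vnorm_ge0 e.
have [del [Hdel H]] := Hd (eps / (vnorm e + 1)) ltac:(apply: Rdiv_lt_0_compat; lra).
exists (del / (vnorm e + 1)); split; first by apply: Rdiv_lt_0_compat; lra.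
move=> s Hs.
have Hs0 := Rabs_pos s.
have Hn : vnorm (vscale s e) < del.
  rewrite vnorm_scale.
  have : Rabs s * (vnorm e + 1) < del.
    have := Rmult_lt_compat_r (vnorm e + 1) _ _ ltac:(lra) Hs.
    by rewrite divmul; lra.
  nra.
have := H _ Hn. rewrite dot_scaler vnorm_scale => H1.
apply: Rle_trans; first exact: H1.
have : eps / (vnorm e + 1) * vnorm e <= eps.
  apply: (Rmult_le_reg_r (vnorm e + 1)); first lra.
  field_simplify; [|lra]. nra.
nra.
Qed.

Lemma open_line (U : vec n -> Prop) y e : is_open U -> U y ->
  exists delta, 0 < delta /\ forall s, Rabs s < delta -> U (vadd y (vscale s e)).
Proof.
move=> HU Uy. have [del [Hdel H]] := HU y Uy.
have Hne := vnorm_ge0 e.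
exists (del / (vnorm e + 1)); split; first by apply: Rdiv_lt_0_compat; lra.
move=> s Hs; apply: H; rewrite vsub_line vnorm_scale.
have Hs0 := Rabs_pos s.
have : Rabs s * (vnorm e + 1) < del.
  have := Rmult_lt_compat_r (vnorm e + 1) _ _ ltac:(lra) Hs.
  by rewrite divmul; lra.
nra.
Qed.

Lemma lemQ (Gam : vec n -> Prop) h x y d : quasiconvex_on Gam h ->
  Gam x -> Gam y -> has_gradient h x d -> h y <= h x -> dot d (vsub y x) <= 0.
Proof.
move=> Hq Gx Gy Hd Hyx; apply: small_le => eps Heps.
have [del [Hdel H]] := LD (vsub y x) Hd Heps.
set t := Rmin 1 (del / 2).
have Ht : 0 < t by apply: Rmin_pos; lra.
have Ht1 : t <= 1 by apply: Rmin_l.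
have Ht2 : t <= del / 2 by apply: Rmin_r.
have Hq' := Hq x y t Gx Gy ltac:(lra).
have Hmax : Rmax (h x) (h y) = h x by apply: Rmax_left.
rewrite Hmax in Hq'.
have := H t ltac:(rewrite Rabs_pos_eq; lra).
rewrite (Rabs_pos_eq t); last lra.
move=> /abs_le_inv [H1 H2].
have : t * dot d (vsub y x) <= t * eps by lra.
move=> /(Rmult_le_reg_l _ _ _ Ht). done.
Qed.

Lemma lemAE (Gam : vec n -> Prop) h x y d d' : quasiconvex_on Gam h ->
  is_open Gam -> Gam x -> Gam y -> has_gradient h x d -> has_gradient h y d' ->
  0 < dot d d -> 0 <= dot d (vsub y x) -> h x <= h y.
Proof.
move=> Hq HG Gx Gy Hd Hd' Hdd Hdir; apply: Rnot_lt_le => Hlt.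
have [del1 [Hdel1 H1]] := LD d Hd' Rlt_0_1.
have [del2 [Hdel2 H2]] := open_line d HG Gy.
set D := Rabs (dot d' d).
have HD : 0 <= D by apply: Rabs_pos.
set s := Rmin (Rmin del1 del2) ((h x - h y) / (D + 2)) / 2.
have Hs0 : 0 < Rmin (Rmin del1 del2) ((h x - h y) / (D + 2)).
  apply: Rmin_pos; first by apply: Rmin_pos.
  apply: Rdiv_lt_0_compat; lra.
have Hs1 := Rmin_l (Rmin del1 del2) ((h x - h y) / (D + 2)).
have Hs2 := Rmin_r (Rmin del1 del2) ((h x - h y) / (D + 2)).
have Hs3 := Rmin_l del1 del2.
have Hs4 := Rmin_r del1 del2.
have Hs : 0 < s by rewrite /s; lra.
have Has : Rabs s = s by apply: Rabs_pos_eq; lra.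
have Gy' := H2 s ltac:(rewrite Has /s; lra).
have := H1 s ltac:(rewrite Has /s; lra). rewrite Has => /abs_le_inv [_ H3].
have Hsd : s * (D + 2) < h x - h y.
  have : s <= (h x - h y) / (D + 2) / 2 by rewrite /s; lra.
  move=> Hle.
  have : s * (D + 2) <= (h x - h y) / 2.
    have := Rmult_le_compat_r (D + 2) _ _ ltac:(lra) Hle.
    have -> : (h x - h y) / (D + 2) / 2 * (D + 2) = (h x - h y) / 2 by field; lra.
    lra.
  lra.
have Hsd' : s * dot d' d <= s * D.
  apply: Rmult_le_compat_l; first lra. exact: Rle_abs.
have Hy' : h (vadd y (vscale s d)) <= h x by nra.
have := lemQ Hq Gx Gy' Hd Hy'.
have -> : vsub (vadd y (vscale s d)) x = vadd (vsub y x) (vscale s d).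
  apply: functional_extensionality => k; rewrite /vsub /vadd /vscale; ring.
rewrite dot_addr dot_scaler. nra.
Qed.

Lemma cone g v : 0 < dot g g -> (forall d, dot g d < 0 -> dot v d <= 0) ->
  exists a, 0 <= a /\ forall k, v k = a * g k.
Proof.
move=> Hg H.
set G := dot g g.
have HG : 0 < G := Hg.
set a := dot v g / G.
have Hvg : 0 <= dot v g.
  have := H (vscale (-1) g). rewrite !dot_scaler -/G => H1.
  have := H1 ltac:(lra). lra.
set u := vsub v (vscale a g).
have Hgu : dot g u = 0.
  rewrite /u dot_subr dot_scaler -/G (dot_comm g v) /a. field. lra.
have Hudef : u = vsub v (vscale a g) by [].
clearbody u.
have Hvu : dot v u = 0.
  apply: small_zero => eps Heps.
  set b := eps / (dot v g + 1).
  have Hb : 0 < b by apply: Rdiv_lt_0_compat; lra.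
  have Hbv : b * dot v g <= eps.
    apply: (Rmult_le_reg_r (dot v g + 1)); first lra.
    rewrite /b; field_simplify; lra.
  have := H (vsub u (vscale b g)). rewrite !dot_subr !dot_scaler Hgu -/G => H1.
  have := H1 ltac:(nra).
  have := H (vsub (vscale (-1) u) (vscale b g)). rewrite !dot_subr !dot_scaler Hgu -/G => H2.
  have := H2 ltac:(nra).
  move=> Ha Hb'. apply: Rabs_le; lra.
have Huu : dot u u = 0.
  rewrite {1}Hudef dot_subl dot_scalel Hvu Hgu; ring.
exists a; split.
  rewrite /a; apply: Rmult_le_pos => //. apply: Rlt_le; apply: Rinv_0_lt_compat; lra.
move=> k. have := dot_self_eq0 Huu k. rewrite Hudef /vsub /vscale. lra.
Qed.

Lemma dot_of_prop g v a w : (forall k, v k = a * g k) -> dot v w = a * dot g w.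
Proof.
move=> H; rewrite /dot -sumZ; apply: eq_bigr => k _; rewrite H; ring.
Qed.

End Anal.
Lemma dot_zerol n (u : vec n) : dot (@vzero n) u = 0.
Proof. rewrite /dot big1 // => k _; rewrite /vzero; ring. Qed.

Lemma kkt_dot n m (g : 'I_m -> vec n -> R) (gf : vec n) (gradg : 'I_m -> vec n -> vec n)
  (xbar : vec n) (lam : 'I_m -> R) (e : vec n)
  (HKKT : forall k : 'I_n,
     gf k + \big[Rplus/0]_(i < m)
         (if Req_EM_T (g i xbar) 0 then lam i * gradg i xbar k else 0) = 0) :
  dot gf e = - \big[Rplus/0]_(i < m)
     (if Req_EM_T (g i xbar) 0 then lam i * dot (gradg i xbar) e else 0).
Proof.
rewrite /dot.
have -> : \big[Rplus/0]_(k < n) (gf k * e k) =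
   \big[Rplus/0]_(k < n) ((-1) * \big[Rplus/0]_(i < m)
       (if Req_EM_T (g i xbar) 0 then lam i * gradg i xbar k * e k else 0)).
  apply: eq_bigr => k _.
  have H := HKKT k.
  have -> : gf k = - \big[Rplus/0]_(i < m)
         (if Req_EM_T (g i xbar) 0 then lam i * gradg i xbar k else 0) by lra.
  have -> : \big[Rplus/0]_(i < m)
       (if Req_EM_T (g i xbar) 0 then lam i * gradg i xbar k * e k else 0) =
     e k * \big[Rplus/0]_(i < m)
         (if Req_EM_T (g i xbar) 0 then lam i * gradg i xbar k else 0).
    rewrite -sumZ; apply: eq_bigr => i _; case: Req_dec_T => ? /=; ring.
  ring.
rewrite sumZ exchange_big /=.
have -> : \big[Rplus/0]_(j < m) \big[Rplus/0]_(i < n)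
     (if Req_EM_T (g j xbar) 0 then lam j * gradg j xbar i * e i else 0) =
   \big[Rplus/0]_(i < m)
     (if Req_EM_T (g i xbar) 0 then lam i * \big[Rplus/0]_(k < n) (gradg i xbar k * e k) else 0).
  apply: eq_bigr => i _; case: Req_dec_T => ? /=.
    rewrite -sumZ; apply: eq_bigr => k _; ring.
  by rewrite big1.
rewrite -Ropp_mult_distr_l Rmult_1_l; reflexivity.
Qed.
Unset Implicit Arguments.

Theorem theorem6 (n m : nat) (Gam X : vec n -> Prop)
  (f : vec n -> R) (g : 'I_m -> vec n -> R)
  (gradf : vec n -> vec n) (gradg : 'I_m -> vec n -> vec n)
  (xbar : vec n) (lam : 'I_m -> R)
  (HGopen : is_open Gam) (HGconv : is_convex Gam)
  (HXopen : is_open X) (HXconv : is_convex X)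
  (HXsub : forall x, X x -> Gam x)
  (Hxbar : solution_set X f g xbar)
  (* f continuously differentiable and quasiconvex on Gamma *)
  (Hfdiff : forall x, Gam x -> has_gradient f x (gradf x))
  (Hfcont : forall x, Gam x -> vcontinuous_at gradf x)
  (Hfqc : quasiconvex_on Gam f)
  (* active constraints differentiable and quasiconvex on Gamma *)
  (Hgdiff : forall i, active g xbar i ->
     forall x, Gam x -> has_gradient (g i) x (gradg i x))
  (Hgqc : forall i, active g xbar i -> quasiconvex_on Gam (g i))
  (* inactive constraints continuous at xbar *)
  (Hgcont : forall i, ~ active g xbar i -> continuous_at_v (g i) xbar)
  (Hgradf0 : gradf xbar <> @vzero n)
  (* MFCQ *)
  (HMFCQ : exists y : vec n, forall i, active g xbar i ->
     dot (gradg i xbar) y < 0)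
  (* KKT multiplier *)
  (Hlam_nonneg : forall i, 0 <= lam i)
  (Hlam_compl : forall i, lam i * g i xbar = 0)
  (HKKT : forall k : 'I_n,
     gradf xbar k
     + \big[Rplus/0]_(i < m)
         (if Req_EM_T (g i xbar) 0 then lam i * gradg i xbar k else 0) = 0) :
  forall x : vec n,
    (solution_set X f g x <-> S1hat X g gradf gradg xbar lam x) /\
    (S1hat X g gradf gradg xbar lam x <-> S2hat X g gradf gradg xbar lam x).
Proof.
have Hkkt := fun e => kkt_dot e HKKT.
set gb := gradf xbar in Hgradf0 Hkkt HKKT HMFCQ *.
have HG : 0 < dot gb gb := dot_self_pos Hgradf0.
have Gxbar : Gam xbar by apply: HXsub; case: Hxbar => [[]].
have S2_Sbar : forall x, S2hat X g gradf gradg xbar lam x -> solution_set X f g x.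
  move=> x [[Xx [Hap Hnap]] [Hdir [Hv0 Hsd]]].
  have Gx := HXsub x Xx.
  have Hfeas : feasible X g x.
    split=> // i; case: (classic (active_pos g xbar lam i)) => H.
      by rewrite Hap //; apply: Rle_refl.
    exact: Hnap.
  split=> // y Hy; apply: Rle_trans (proj2 Hxbar y Hy).
  rewrite -/gb in Hsd.
  set v := gradf x in Hv0 Hsd *.
  have Hvpos := vnorm_pos Hv0.
  have Hgpos := vnorm_pos Hgradf0.
  have Hvprop : forall k, v k = (vnorm v / vnorm gb) * gb k.
    move=> k; have H := Hsd k.
    have E : v k = v k / vnorm v * vnorm v by field; lra.
    rewrite E H; field; lra.
  have Hdg : dot gb (vsub x xbar) <= 0.
    rewrite Hkkt.
    suff : 0 <= \big[Rplus/0]_(i < m)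
     (if Req_EM_T (g i xbar) 0 then lam i * dot (gradg i xbar) (vsub x xbar) else 0) by lra.
    apply: sum_ge0 => i; case: Req_dec_T => Hi /=; last by apply: Rle_refl.
    case: (Rle_lt_or_eq_dec _ _ (Hlam_nonneg i)) => Hl.
      apply: Rmult_le_pos; [lra| apply: Hdir; split=> //].
    rewrite -Hl; lra.
  apply: (lemAE Hfqc HGopen Gx Gxbar (Hfdiff x Gx) (Hfdiff xbar Gxbar) (dot_self_pos Hv0)).
  rewrite (dot_of_prop _ Hvprop) !dot_subr.
  rewrite dot_subr in Hdg.
  apply: Rmult_le_pos; last lra.
  apply: Rmult_le_pos; first lra. apply: Rlt_le; apply: Rinv_0_lt_compat; lra.
have Sbar_S1 : forall x, solution_set X f g x -> S1hat X g gradf gradg xbar lam x.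
  move=> x Hx; have [[Xx Hgx] Hopt] := Hx.
  have Gx := HXsub x Xx.
  set e := vsub x xbar.
  have Hfx : f x = f xbar.
    apply: Rle_antisym; [exact: Hopt _ (proj1 Hxbar)| exact: (proj2 Hxbar) _ (proj1 Hx)].
  have Hact_dot : forall i, g i xbar = 0 -> dot (gradg i xbar) e <= 0.
    move=> i Hi; apply: (lemQ (Hgqc i Hi) Gxbar Gx (Hgdiff i Hi xbar Gxbar)).
    rewrite Hi; exact: Hgx i.
  have Hb_le : forall i, (if Req_EM_T (g i xbar) 0
       then lam i * dot (gradg i xbar) e else 0) <= 0.
    move=> i; case: Req_dec_T => Hi /=; last by apply: Rle_refl.
    have := Hact_dot i Hi; have := Hlam_nonneg i; nra.
  have Hdge : dot gb e <= 0.
    apply: (lemQ Hfqc Gxbar Gx (Hfdiff xbar Gxbar)); rewrite Hfx; apply: Rle_refl.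
  have Hsum := sum_le0 Hb_le.
  have Hdg0 : dot gb e = 0 by have := Hkkt e; lra.
  have Hbi0 : forall i, (if Req_EM_T (g i xbar) 0
       then lam i * dot (gradg i xbar) e else 0) = 0.
    move=> i; apply: Rle_antisym; first exact: Hb_le.
    have := sum_ge_term i Hb_le. have := Hkkt e. lra.
  have Hap_dot : forall i, active_pos g xbar lam i -> dot (gradg i xbar) e = 0.
    move=> i [Hi Hl]; have := Hbi0 i.
    case: Req_dec_T => Hi' /=; last by exfalso; apply: Hi'.
    move=> H; have := Rmult_integral _ _ H; case=> // H'; lra.
  have Hap_g : forall i, active_pos g xbar lam i -> g i x = 0.
    move=> i [Hi Hl]; apply: Rle_antisym; first exact: Hgx i.
    rewrite -Hi.
    apply: (lemAE (Hgqc i Hi) HGopen Gxbar Gx (Hgdiff i Hi xbar Gxbar) (Hgdiff i Hi x Gx)).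
      apply: dot_self_pos => H0.
      have [y Hy] := HMFCQ. have := Hy i Hi. rewrite H0 dot_zerol; lra.
    rewrite -/e Hap_dot //; apply: Rle_refl.
  have Hz : forall t, 0 <= t <= 1 -> f (vadd xbar (vscale t e)) = f xbar.
    move=> t Ht; have Gz := HGconv xbar x t Gxbar Gx Ht.
    apply: Rle_antisym.
      have := Hfqc xbar x t Gxbar Gx Ht. rewrite Hfx Rmax_left //; apply: Rle_refl.
    apply: (lemAE Hfqc HGopen Gxbar Gz (Hfdiff xbar Gxbar) (Hfdiff _ Gz) HG).
    rewrite -/e vsub_line dot_scaler Hdg0; lra.
  set v := gradf x.
  have Hve : dot v e = 0.
    apply: small_zero => eps Heps.
    have [del [Hdel H]] := LD e (Hfdiff x Gx) Heps.
    set s := Rmin (1/2) (del/2).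
    have Hs0 : 0 < s by apply: Rmin_pos; lra.
    have Hs1 : s <= 1/2 by apply: Rmin_l.
    have Hs2 : s <= del/2 by apply: Rmin_r.
    have := H (-s) ltac:(rewrite Rabs_Ropp Rabs_pos_eq; lra).
    have -> : vadd x (vscale (-s) e) = vadd xbar (vscale (1 - s) e).
      apply: functional_extensionality => k; rewrite /vadd /vscale /e /vsub; ring.
    rewrite Hz; last lra.
    rewrite Hfx.
    have -> : f xbar - f xbar - - s * dot (gradf x) e = s * dot v e by rewrite /v; ring.
    rewrite Rabs_mult Rabs_Ropp (Rabs_pos_eq s); last lra.
    move=> H1; apply: (Rmult_le_reg_l s) => //; lra.
  have Hcone : forall d, dot gb d < 0 -> dot v d <= 0.
    move=> d Hd.
    have [del [Hdel H]] := LD d (Hfdiff xbar Gxbar) (eps := - dot gb d / 2) ltac:(lra).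
    have [del2 [Hdel2 H2]] := open_line d HGopen Gxbar.
    set s := Rmin del del2 / 2.
    have Hs0 : 0 < s by rewrite /s; have := Rmin_pos _ _ Hdel Hdel2; lra.
    have Hs1 := Rmin_l del del2. have Hs2 := Rmin_r del del2.
    have Has : Rabs s = s by apply: Rabs_pos_eq; lra.
    have Gw := H2 s ltac:(rewrite Has /s; lra).
    have := H s ltac:(rewrite Has /s; lra). rewrite Has => /abs_le_inv [_ H3].
    rewrite -/gb in H3.
    have Hw : f (vadd xbar (vscale s d)) <= f x.
      rewrite Hfx. have : s * dot gb d < 0 by nra. nra.
    have := lemQ Hfqc Gx Gw (Hfdiff x Gx) Hw.
    have -> : vsub (vadd xbar (vscale s d)) x = vsub (vscale s d) e.
      apply: functional_extensionality => k; rewrite /vadd /vscale /e /vsub; ring.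
    rewrite dot_subr dot_scaler -/v Hve. nra.
  have [a [Ha0 Hva]] := cone HG Hcone.
  have Hapos : 0 < a.
    case: (Rle_lt_or_eq_dec _ _ Ha0) => // Ha; exfalso.
    have Hvg : dot v gb = 0 by rewrite (dot_of_prop _ Hva) -Ha; ring.
    set S := \big[Rplus/0]_(k < n) Rabs (gb k).
    have HS : 0 <= S by apply: sum_ge0 => k; apply: Rabs_pos.
    set eps0 := dot gb gb / (2 * (S + 1)).
    have Heps0 : 0 < eps0 by apply: Rdiv_lt_0_compat; lra.
    have [d0 [Hd0 Hc]] := Hfcont xbar Gxbar eps0 Heps0.
    have Hne := vnorm_ge0 e.
    set t := Rmin (1/2) (d0 / (2 * (vnorm e + 1))).
    have Ht0 : 0 < t by apply: Rmin_pos; [lra| apply: Rdiv_lt_0_compat; lra].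
    have Ht1 : t <= 1/2 by apply: Rmin_l.
    have Ht2 : t <= d0 / (2 * (vnorm e + 1)) by apply: Rmin_r.
    set mm := vadd xbar (vscale t e).
    have Gm : Gam mm by apply: HGconv => //; lra.
    have Hfm : f mm = f xbar by apply: Hz; lra.
    have Hnm : vnorm (vsub mm xbar) < d0.
      rewrite /mm vsub_line vnorm_scale Rabs_pos_eq; last lra.
      have : t * (2 * (vnorm e + 1)) <= d0.
        have := Rmult_le_compat_r (2 * (vnorm e + 1)) _ _ ltac:(lra) Ht2.
        have -> : d0 / (2 * (vnorm e + 1)) * (2 * (vnorm e + 1)) = d0 by field; lra.
        done.
      nra.
    have Hw := Hc mm Hnm. rewrite -/gb in Hw.
    set B := dot (gradf mm) gb.
    have HB : dot gb gb / 2 < B.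
      have E : B = dot gb gb + dot (vsub (gradf mm) gb) gb by rewrite dot_subl /B; ring.
      have Hb := dot_bound (vsub (gradf mm) gb) gb. rewrite -/S in Hb.
      have Hwn := vnorm_ge0 (vsub (gradf mm) gb).
      have H1 : vnorm (vsub (gradf mm) gb) * S <= eps0 * S.
        apply: Rmult_le_compat_r => //; lra.
      have H2 : eps0 * S = dot gb gb / 2 - dot gb gb / (2 * (S + 1)) by rewrite /eps0; field; lra.
      have H3 : 0 < dot gb gb / (2 * (S + 1)) by apply: Rdiv_lt_0_compat; lra.
      have := Rle_abs (- dot (vsub (gradf mm) gb) gb). rewrite Rabs_Ropp -/S. lra.
    have HBpos : 0 < B by lra.
    have [d1 [Hd1 H1]] := LD gb (Hfdiff x Gx) (eps := t * B / 8) ltac:(nra).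
    have [d2 [Hd2 H2]] := LD gb (Hfdiff mm Gm) (eps := B / 2) ltac:(lra).
    have [d3 [Hd3 H3]] := LD gb (Hfdiff xbar Gxbar) (eps := dot gb gb / 2) ltac:(lra).
    have [d4 [Hd4 H4]] := open_line gb HGopen Gxbar.
    have [d5 [Hd5 H5]] := open_line gb HGopen Gx.
    set sg := Rmin (Rmin d1 d2) (Rmin (Rmin d3 d4) d5) / 2.
    have Hm1 := Rmin_l (Rmin d1 d2) (Rmin (Rmin d3 d4) d5).
    have Hm2 := Rmin_r (Rmin d1 d2) (Rmin (Rmin d3 d4) d5).
    have Hm3 := Rmin_l d1 d2. have Hm4 := Rmin_r d1 d2.
    have Hm5 := Rmin_l (Rmin d3 d4) d5. have Hm6 := Rmin_r (Rmin d3 d4) d5.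
    have Hm7 := Rmin_l d3 d4. have Hm8 := Rmin_r d3 d4.
    have Hsg0 : 0 < sg.
      rewrite /sg. have : 0 < Rmin (Rmin d1 d2) (Rmin (Rmin d3 d4) d5).
        by repeat apply: Rmin_pos.
      lra.
    have Hsg1 : sg < d1 by rewrite /sg; lra.
    have Hsg2 : sg < d2 by rewrite /sg; lra.
    have Hsg3 : sg < d3 by rewrite /sg; lra.
    have Hsg4 : sg < d4 by rewrite /sg; lra.
    have Hsg5 : sg < d5 by rewrite /sg; lra.
    clearbody sg.
    set kp := t * sg / (2 * (1 - t)).
    have Hkp0 : 0 < kp by apply: Rdiv_lt_0_compat; nra.
    have Hkp1 : kp <= sg / 2.
      rewrite /kp. apply: (Rmult_le_reg_r (2 * (1 - t))); first lra.
      have -> : t * sg / (2 * (1 - t)) * (2 * (1 - t)) = t * sg by field; lra.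
      nra.
    have Hkpdef : kp = t * sg / (2 * (1 - t)) by [].
    clearbody kp.
    have Habk : Rabs (- kp) = kp by rewrite Rabs_Ropp Rabs_pos_eq; lra.
    have Habs : Rabs sg = sg by rewrite Rabs_pos_eq; lra.
    have Habt : Rabs (t * sg / 2) = t * sg / 2 by rewrite Rabs_pos_eq; nra.
    have GP := H4 (- kp) ltac:(rewrite Habk; lra).
    have GQ := H5 sg ltac:(rewrite Habs; lra).
    have fP : f (vadd xbar (vscale (- kp) gb)) <= f xbar.
      have := H3 (- kp) ltac:(rewrite Habk; lra). rewrite Habk => /abs_le_inv [_ H'].
      rewrite -/gb in H'.
      have : 0 < kp * dot gb gb by nra. nra.
    have fQ : f (vadd x (vscale sg gb)) <= f xbar + t * B / 8 * sg.
      have := H1 sg ltac:(rewrite Habs; lra). rewrite Habs -/v Hvg Hfx => /abs_le_inv [_ H'].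
      lra.
    have fM : f mm + t * sg / 2 * B - B / 2 * (t * sg / 2) <= f (vadd mm (vscale (t * sg / 2) gb)).
      have := H2 (t * sg / 2) ltac:(rewrite Habt; nra). rewrite Habt -/B => /abs_le_inv [H' _].
      lra.
    have Hcomb := Hfqc _ _ t GP GQ ltac:(lra).
    have Eq : vadd (vadd xbar (vscale (- kp) gb))
        (vscale t (vsub (vadd x (vscale sg gb)) (vadd xbar (vscale (- kp) gb)))) =
        vadd mm (vscale (t * sg / 2) gb).
      apply: functional_extensionality => k.
      rewrite /mm /vadd /vscale /e /vsub Hkpdef.
      field; lra.
    rewrite Eq in Hcomb.
    have Hmax : Rmax (f (vadd xbar (vscale (- kp) gb))) (f (vadd x (vscale sg gb)))
        <= f xbar + t * B / 8 * sg.
      apply: Rmax_lub; last done.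
      have : 0 <= t * B / 8 * sg by apply: Rmult_le_pos; nra.
      lra.
    rewrite Hfm in fM.
    have : t * sg * B <= 0 by nra.
    have : 0 < t * sg * B by apply: Rmult_lt_0_compat => //; nra.
    lra.
  have Hvprop : v = vscale a gb.
    by apply: functional_extensionality => k; rewrite /vscale; apply: Hva.
  have Hgn := vnorm_pos Hgradf0.
  split.
    split; first exact: Xx.
    split; first exact: Hap_g.
    by move=> i _; exact: Hgx i.
  split; first exact: Hap_dot.
  split.
    rewrite -/v => H0.
    have := dot_of_prop gb Hva. rewrite H0 dot_zerol => H1.
    have := H1. nra.
  move=> k; rewrite -/v -/gb Hvprop vnorm_scale Rabs_pos_eq; last lra.
  rewrite /vscale; field; lra.
have S1_S2 : forall x, S1hat X g gradf gradg xbar lam x -> S2hat X g gradf gradg xbar lam x.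
  move=> x [HX1 [Hd Hr]]; split=> //; split=> // i Hi; rewrite Hd //; apply: Rle_refl.
move=> x; split; split.
- exact: Sbar_S1.
- by move=> H; apply: S2_Sbar; apply: S1_S2.
- exact: S1_S2.
- by move=> H; apply: Sbar_S1; apply: S2_Sbar.
Qed.
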